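(* Let $p>1$, let $n>p$ be an integer, let $M$ be a constant with $M>p-1$ and $M>\frac{n(p-1)}{n-p}$, and set $Q=\frac{Mp-p+1}{p-1}$. Put \[ a=\frac{M-p+1}{Mn-pn+n-Mp},\qquad u(r)=\left(\frac{a n-1}{1+a^{\frac{p}{p-1}} M\, r^{\frac{p}{p-1}}}\right)^{\frac{p-1}{M-p+1}} \quad (r\ge 0). \] Then $a>0$, $an>1$, and $u$ is a positive ground state solution of \[ \left(\varphi(u'(r))\right)'+\frac{n-1}{r}\varphi(u'(r))+u^M+u^Q=0 \quad (r>0),\qquad u'(0)=0, \] i.e. $u>0$ on $[0,\infty)$, $u$ satisfies the equation for all $r>0$, $u'(0)=0$, and $u(r)\to 0$ as $r\to\infty$. Moreover $u$ satisfies $\varphi(u'(r))=-a r u^M(r)$ for all $r\ge 0$.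
   Context: Here $\varphi(z)=z|z|^{p-2}$, so that $\left(\varphi(u')\right)'+\frac{n-1}{r}\varphi(u')$ is the radial $p$-Laplacian in $\mathbb{R}^n$. *)

(* Defs.v *)
From Stdlib Require Import Reals Lra.
From Coquelicot Require Import Coquelicot.
Open Scope R_scope.

(* Real power x^y for x >= 0 with the convention 0^y = 0 (used only for y > 0).
   Stdlib's Rpower 0 y = exp (y * ln 0) = 1, which is wrong at 0, hence this. *)
Definition rpow (x y : R) : R := if Rle_dec x 0 then 0 else Rpower x y.

Definition phi (p z : R) : R := if Req_EM_T z 0 then 0 else z * Rpower (Rabs z) (p - 2).

Definition gs_a (p M : R) (n : nat) : R :=
  (M - p + 1) / (M * INR n - p * INR n + INR n - M * p).

Definition gs_u (p M : R) (n : nat) (r : R) : R :=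
  let a := gs_a p M n in
  Rpower ((a * INR n - 1) /
          (1 + Rpower a (p / (p - 1)) * M * rpow (Rabs r) (p / (p - 1))))
         ((p - 1) / (M - p + 1)).

(* Main.v *)
Require Import Defs.
From Stdlib Require Import Reals Lra.
From Coquelicot Require Import Coquelicot.
Open Scope R_scope.
Definition W (A q s : R) := 1 + A * exp (q * ln s).
Definition U (k C A q s : R) := exp (k * ln (C / W A q s)).

Lemma W_pos A q s : 0 <= A -> 0 < W A q s.
Proof. intros; unfold W. pose proof (exp_pos (q * ln s)). nra. Qed.

Lemma U_der k C A q r : 0 < C -> 0 <= A -> 0 < r ->
  is_derive (U k C A q) r (- (k*A*q) * (exp (q * ln r) / r) * U k C A q r / W A q r).
Proof.
intros HC HA Hr. pose proof (W_pos A q r HA) as HW.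
unfold U, W in *. auto_derive.
- repeat split; auto; try lra. apply Rdiv_lt_0_compat; auto.
- unfold Rdiv. set (X := exp (q * ln r)) in *. set (E := exp _). field. repeat split; lra.
Qed.

Ltac pos := repeat (assumption || apply Rmult_lt_0_compat || apply Rdiv_lt_0_compat || apply exp_pos || apply Rinv_0_lt_compat || lra).

Lemma phi_D p M a k q C A r : 1 < p -> 0 < a -> p - 1 < M -> 0 < r ->
  q = p / (p-1) -> k = (p-1)/(M-p+1) -> C = k*q*a*M -> A = exp (q * ln a) * M ->
  phi p (- (k*A*q) * (exp (q * ln r) / r) * U k C A q r / W A q r)
  = - (a * r * Rpower (U k C A q r) M).
Proof.
intros Hp Ha HM Hr Hq Hk HC HA.
assert (Hq0 : 0 < q) by (rewrite Hq; pos).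
assert (Hk0 : 0 < k) by (rewrite Hk; pos).
assert (HM0 : 0 < M) by lra.
assert (HA0 : 0 < A) by (rewrite HA; pos).
assert (HC0 : 0 < C) by (rewrite HC; pos).
assert (HW : 0 < W A q r) by (apply W_pos; lra).
assert (HU : 0 < U k C A q r) by (unfold U; pos).
set (X := exp (q * ln r)).
assert (HX : 0 < X) by pos.
set (D := - (k*A*q) * (X / r) * U k C A q r / W A q r).
assert (HD : -D = k*A*q*(X/r)*U k C A q r / W A q r) by (unfold D; field; lra).
assert (HD0 : 0 < -D) by (rewrite HD; pos).
assert (lnD : ln (-D) = ln k + (q * ln a + ln M) + ln q + (q * ln r - ln r) + k * (ln C - ln (W A q r)) - ln (W A q r)).
{ rewrite HD. rewrite ln_div; [|pos|pos]. rewrite !ln_mult; try pos.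
  rewrite ln_div; try pos. unfold X. rewrite ln_exp. unfold U. rewrite ln_exp.
  rewrite ln_div; try pos. rewrite HA. rewrite ln_mult; try pos. rewrite ln_exp. ring. }
assert (lnC : ln C = ln k + ln q + ln a + ln M).
{ rewrite HC. rewrite !ln_mult; try pos. }
unfold phi. destruct (Req_EM_T D 0) as [E|_]; [lra|].
rewrite Rabs_left by lra.
unfold Rpower.
replace D with (- exp (ln (-D))) at 1 by (rewrite exp_ln; lra).
replace (a * r * exp (M * ln (U k C A q r))) with (exp (ln a + ln r + M * (k * (ln C - ln (W A q r))))).
2:{ rewrite !exp_plus, !exp_ln by lra. unfold U. rewrite ln_exp, ln_div by pos. reflexivity. }
replace (- exp (ln (- D)) * exp ((p - 2) * ln (- D))) with (- (exp (ln (- D)) * exp ((p - 2) * ln (- D)))) by ring.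
rewrite <- exp_plus. apply f_equal, f_equal.
rewrite lnD, lnC.
rewrite Hq, Hk. field. lra.
Qed.

Lemma ode_D N a M k q C A Q r : 0 < a -> 0 < r -> 0 < C -> 0 <= A ->
  C = a * N - 1 -> C = k*q*a*M -> Q * k = M * k + 1 ->
  is_derive (fun s => - (a * s * Rpower (U k C A q s) M)) r
   (- ((N - 1) / r * (- (a * r * Rpower (U k C A q r) M)) + Rpower (U k C A q r) M + Rpower (U k C A q r) Q)).
Proof.
intros Ha Hr HC0 HA HC1 HC2 HQ.
assert (HW : 0 < W A q r) by (apply W_pos; lra).
apply is_derive_ext with (fun s => - (a * s * exp (M * (k * ln (C / W A q s))))).
{ intros s. unfold Rpower, U. rewrite ln_exp. reflexivity. }
unfold Rpower, U. rewrite ln_exp.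
replace (Q * (k * ln (C / W A q r))) with (M * (k * ln (C / W A q r)) + ln (C / W A q r))
  by (transitivity ((Q*k) * ln (C / W A q r)); [rewrite HQ; ring | ring]).
rewrite exp_plus, exp_ln by (apply Rdiv_lt_0_compat; lra).
unfold W in *. auto_derive.
- repeat split; auto; try lra. apply Rdiv_lt_0_compat; auto.
- set (X := exp (q * ln r)) in *. set (E := exp _). unfold Rdiv.
  replace N with ((C + 1) / a) by (field_simplify_eq; lra).
  rewrite HC2 in *. field. repeat split; try lra; intro H0; rewrite H0 in HC0; lra.
Qed.
Lemma rpow_der0 q : 1 < q -> is_derive (fun s => rpow (Rabs s) q) 0 0.
Proof.
intros Hq. apply is_derive_Reals. intros eps He.
assert (Hd : 0 < exp (ln eps / (q - 1))) by apply exp_pos.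
exists (mkposreal _ Hd). intros h Hh Hlt. simpl in Hlt.
unfold rpow. rewrite Rabs_R0. destruct (Rle_dec 0 0) as [_|F]; [|lra].
rewrite Rplus_0_l. destruct (Rle_dec (Rabs h) 0) as [F|_].
{ pose proof (Rabs_pos_lt h Hh); lra. }
assert (Hh0 : 0 < Rabs h) by (apply Rabs_pos_lt; auto).
replace ((Rpower (Rabs h) q - 0) / h - 0) with (Rpower (Rabs h) q / h) by (field; auto).
rewrite Rabs_div by auto. rewrite (Rabs_right (Rpower _ _)) by (left; apply exp_pos).
unfold Rpower. replace (Rabs h) with (exp (ln (Rabs h))) at 2 by (apply exp_ln; auto).
rewrite <- Rdiv_minus_distr || idtac.
unfold Rdiv. rewrite <- exp_Ropp, <- exp_plus.
rewrite <- (exp_ln eps) by auto. apply exp_increasing.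
apply ln_increasing in Hlt; auto. rewrite ln_exp in Hlt.
apply (Rmult_lt_compat_l (q-1)) in Hlt; [|lra].
replace ((q - 1) * (ln eps / (q - 1))) with (ln eps) in Hlt by (field; lra). lra.
Qed.

Lemma lim_aux k C A q : 0 < k -> 0 < C -> 0 < A -> 1 < q ->
  is_lim (fun s => Rpower (C / (1 + A * rpow (Rabs s) q)) k) p_infty 0.
Proof.
intros Hk HC HA Hq. apply is_lim_spec. intros eps. simpl.
set (eta := exp (ln eps / k)).
assert (Heta : 0 < eta) by apply exp_pos.
exists (Rmax 1 (C / (eta * A))). intros x Hx.
assert (Hx1 : 1 < x) by (eapply Rle_lt_trans; [apply Rmax_l|exact Hx]).
assert (Hx2 : C / (eta * A) < x) by (eapply Rle_lt_trans; [apply Rmax_r|exact Hx]).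
unfold rpow. rewrite (Rabs_right x) by lra. destruct (Rle_dec x 0) as [F|_]; [lra|].
assert (HX : x <= Rpower x q).
{ unfold Rpower. rewrite <- (exp_ln x) at 1 by lra. apply exp_le_3 || idtac.
  assert (0 < ln x) by (rewrite <- ln_1; apply ln_increasing; lra).
  destruct (Rlt_dec (ln x) (q * ln x)) as [L|L]; [left; apply exp_increasing; auto | nra]. }
assert (HG : C / (1 + A * Rpower x q) < eta).
{ apply (Rmult_lt_compat_r (eta * A)) in Hx2; [|pos].
  replace (C / (eta * A) * (eta * A)) with C in Hx2 by (field; lra).
  apply Rmult_lt_reg_r with (1 + A * Rpower x q); [nra|].
  unfold Rdiv. rewrite Rmult_assoc, Rinv_l by nra. nra. }
assert (HG0 : 0 < C / (1 + A * Rpower x q)) by (apply Rdiv_lt_0_compat; nra).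
rewrite Rminus_0_r, Rabs_right by (left; apply exp_pos).
unfold Rpower at 1. rewrite <- (exp_ln eps) by (destruct eps; simpl; lra).
apply exp_increasing. apply ln_increasing in HG; auto. unfold eta in HG. rewrite ln_exp in HG.
apply (Rmult_lt_compat_l k) in HG; auto.
replace (k * (ln eps / k)) with (ln (pos eps)) in HG by (field; lra). lra.
Qed.

Theorem mainTheorem2 (p M : R) (n : nat) :
  1 < p -> p < INR n -> p - 1 < M -> INR n * (p - 1) / (INR n - p) < M ->
  let Q := (M * p - p + 1) / (p - 1) in
  let a := gs_a p M n in
  let u := gs_u p M n in
  0 < a /\ 1 < a * INR n /\
  (forall r, 0 <= r -> 0 < u r) /\
  (forall r, 0 < r ->
     ex_derive u r /\
     is_derive (fun s => phi p (Derive u s)) r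
       (- ((INR n - 1) / r * phi p (Derive u r) + Rpower (u r) M + Rpower (u r) Q))) /\
  is_derive u 0 0 /\
  is_lim u p_infty 0 /\
  (forall r, 0 <= r -> phi p (Derive u r) = - (a * r * Rpower (u r) M)).
Proof.
intros Hp Hn HM HM2 Q a u.
set (N := INR n) in *.
assert (HNp : 0 < N - p) by lra.
assert (HD : N * (p - 1) < M * (N - p)).
{ apply (Rmult_lt_compat_r (N - p)) in HM2; auto.
  replace (N * (p - 1) / (N - p) * (N - p)) with (N * (p - 1)) in HM2 by (field; lra). lra. }
assert (Ha : 0 < a).
{ unfold a, gs_a. fold N. apply Rdiv_lt_0_compat; nra. }
set (q := p / (p - 1)).
set (k := (p - 1) / (M - p + 1)).
set (C := a * N - 1).
set (A := Rpower a q * M).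
assert (HCe : C = k * q * a * M).
{ unfold C, k, q, a, gs_a. fold N. field. repeat split; nra. }
assert (HQk : Q * k = M * k + 1).
{ unfold Q, k. field. split; lra. }
assert (Hq : 1 < q).
{ unfold q. apply (Rmult_lt_reg_r (p - 1)); [lra|]. unfold Rdiv. rewrite Rmult_assoc, Rinv_l by lra. lra. }
assert (Hk : 0 < k) by (unfold k; pos).
assert (HC : 0 < C) by (rewrite HCe; pos).
assert (HA : 0 < A) by (unfold A, Rpower; pos).
assert (Hu : forall s, 0 < s -> u s = U k C A q s).
{ intros s Hs. unfold u, gs_u, U, W, rpow. fold a N.
  rewrite (Rabs_right s) by lra. destruct (Rle_dec s 0) as [F|_]; [lra|]. reflexivity. }
assert (Hloc : forall r, 0 < r -> locally r (fun s => U k C A q s = u s)).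
{ intros r Hr. apply (locally_interval _ r 0 p_infty); simpl; auto.
  intros y Hy _. symmetry. apply Hu; auto. }
set (Dr := fun r => - (k*A*q) * (exp (q * ln r) / r) * U k C A q r / W A q r).
assert (Hder : forall r, 0 < r -> is_derive u r (Dr r)).
{ intros r Hr. eapply is_derive_ext_loc. apply Hloc; auto. apply U_der; lra. }
assert (Hphi : forall r, 0 < r -> phi p (Derive u r) = - (a * r * Rpower (u r) M)).
{ intros r Hr. rewrite (is_derive_unique _ _ _ (Hder r Hr)). rewrite Hu by auto.
  apply phi_D; auto; lra. }
assert (Hder0 : is_derive u 0 0).
{ assert (E : forall s, u s = (fun t => Rpower (C / (1 + A * t)) k) (rpow (Rabs s) q)).
  { intros s. reflexivity. }
  apply is_derive_ext with (fun s => (fun t => Rpower (C / (1 + A * t)) k) (rpow (Rabs s) q)).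
  { intros s. symmetry. apply E. }
  replace 0 with (scal 0 (Derive (fun t => Rpower (C / (1 + A * t)) k) (rpow (Rabs 0) q))) at 2
    by (unfold scal; simpl; unfold mult; simpl; ring).
  apply (is_derive_comp (fun t => Rpower (C / (1 + A * t)) k) (fun s => rpow (Rabs s) q)); [|apply rpow_der0; auto].
  apply Derive_correct. unfold rpow. rewrite Rabs_R0. destruct (Rle_dec 0 0) as [_|F]; [|lra].
  unfold Rpower. auto_derive. repeat split; try (rewrite Rmult_0_r, Rplus_0_r; lra).
  }
split; auto. split.
{ unfold C in HC; lra. }
split.
{ intros r _. unfold u, gs_u, Rpower. apply exp_pos. }
split.
{ intros r Hr. split. { eexists. apply Hder; auto. }
  rewrite (Hphi r Hr). rewrite (Hu r Hr).
  eapply is_derive_ext_loc.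
  2:{ apply (ode_D N a M k q C A Q r); auto; lra. }
  apply (locally_interval _ r 0 p_infty); simpl; auto.
  intros y Hy _. rewrite Hphi by auto. rewrite Hu by auto. reflexivity. }
split; auto. split.
{ apply lim_aux; auto. }
intros r Hr. destruct Hr as [Hr|Hr]; [apply Hphi; auto|].
subst r. rewrite (is_derive_unique _ _ _ Hder0). unfold phi.
destruct (Req_EM_T 0 0) as [_|F]; [ring|lra].
Qed.
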